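(* Let $\mathsf{KEM}_{\mathrm{eph}}$ be a $\delta_{\mathrm{eph}}$-correct key encapsulation mechanism and $\mathsf{KEM}_{\mathrm{stat}}$ a $\delta_{\mathrm{stat}}$-correct key encapsulation mechanism, and let $\Pi=(\mathsf{Init},\mathsf{SendM1},\mathsf{SendM2})$ be the authenticated key exchange protocol with QKD oracle described in the context, built from these KEMs, a key-derivation function $\mathsf{KDF}$ and two MACs $\mathsf{MAC}^{(qkd)},\mathsf{MAC}^{(pqc)}$. Then $\Pi$ is a $(\delta_{\mathrm{eph}}+2\delta_{\mathrm{stat}})$-correct AKE: for any two completed sessions $\mathit{sid}$ and $\mathit{sid}'$ of $\Pi$ that match each other and whose QKD key identifier has not been corrupted, $$\Pr[\text{session key of } \mathit{sid} \neq \text{session key of } \mathit{sid}'] \le \delta_{\mathrm{eph}}+2\delta_{\mathrm{stat}}.$$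
   Context: A KEM is a triple $(\mathsf{KeyGen},\mathsf{Encaps},\mathsf{Decaps})$; it is $\delta$-correct if for $(pk,sk)\leftarrow\mathsf{KeyGen}()$ and $(c,k)\leftarrow\mathsf{Encaps}(pk)$ one has $\Pr[\mathsf{Decaps}(sk,c)\neq k]\le\delta$. Parties $i$ hold static key pairs $(pk_i,sk_i)$ of $\mathsf{KEM}_{\mathrm{stat}}$. QKD oracle: for each session $\mathit{sid}$ the protocol may call $\mathsf{QKD\text{-}GET\text{-}KEY}(\mathit{sid},\ell_{qkd})$, which returns a key identifier $\mathit{kid}$ and a key $k_{qkd}$ of length $\ell_{qkd}$, and $\mathsf{QKD\text{-}GET\text{-}KEY\text{-}WITH\text{-}ID}(\mathit{sid},\mathit{kid})$, which returns the key stored under $\mathit{kid}$ for the corresponding peer, or $\bot$. A key identifier is ''corrupted'' if the adversary has overridden the key stored under it; for an uncorrupted identifier both calls give the same key. Protocol $\Pi$ (destructuring assignments mean: parse, and abort the session on wrong format; $(x\|y):=k$ splits $k$ so that $x$ has the length of a MAC key and $y$ is the rest): $\mathsf{Combine}(i_I,i_R,t,k_{qkd},k_{pqc})$: $(k_{qkd,m}\|k_{qkd,s}):=k_{qkd}$; $(k_{pqc,m}\|k_{pqc,s}):=k_{pqc}$; $k_{sess}:=k_{qkd,s}\oplus k_{pqc,s}$; $\tau_1:=\mathsf{MAC}^{(qkd)}_{k_{qkd,m}}((t,i_I,i_R))$; $\tau_2:=\mathsf{MAC}^{(pqc)}_{k_{pqc,m}}((t,\tau_1,i_I,i_R))$;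 return $(k_{sess},\tau_1,\tau_2)$. $\mathsf{Init}(pk_j)$ (initiator, peer $j$): $(c_b,k_b)\leftarrow\mathsf{Encaps}_{\mathrm{stat}}(pk_j)$; $(pk_e,sk_e)\leftarrow\mathsf{KeyGen}_{\mathrm{eph}}()$; $m_1:=(c_b,pk_e)$; state $s:=(k_b,sk_e,m_1)$; output $(m_1,s)$. $\mathsf{SendM1}(i,sk_i,j,pk_j,m_1)$ (responder $i$, peer $j$, session $\mathit{sid}$): $(c_b,pk_e):=m_1$; $k_b':=\mathsf{Decaps}_{\mathrm{stat}}(sk_i,c_b)$; $(c_a,k_a)\leftarrow\mathsf{Encaps}_{\mathrm{stat}}(pk_j)$; $(c_e,k_e)\leftarrow\mathsf{Encaps}_{\mathrm{eph}}(pk_e)$; $k_{pqc}:=\mathsf{KDF}(k_b',k_a,k_e)$; $(\mathit{kid},k_{qkd})\leftarrow\mathsf{QKD\text{-}GET\text{-}KEY}(\mathit{sid},\ell_{qkd})$; $t:=(m_1,(c_a,c_e,\mathit{kid}))$; $(k_{sess},\tau_1,\tau_2):=\mathsf{Combine}(j,i,t,k_{qkd},k_{pqc})$; $m_2:=(c_a,c_e,\mathit{kid},\tau_1,\tau_2)$; output $(m_2,k_{sess})$. $\mathsf{SendM2}(i,sk_i,j,s,m_2)$ (initiator $i$, peer $j$, session $\mathit{sid}$): $(c_a,c_e,\mathit{kid},\tau_1',\tau_2'):=m_2$; $(k_b,sk_e,m_1):=s$; $k_a':=\mathsf{Decaps}_{\mathrm{stat}}(sk_i,c_a)$; $k_e':=\mathsf{Decaps}_{\mathrm{eph}}(sk_e,c_e)$;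 $k_{pqc}:=\mathsf{KDF}(k_b,k_a',k_e')$; $k_{qkd}:=\mathsf{QKD\text{-}GET\text{-}KEY\text{-}WITH\text{-}ID}(\mathit{sid},\mathit{kid})$, abort if $\bot$; $t:=(m_1,(c_a,c_e,\mathit{kid}))$; $(k_{sess},\tau_1,\tau_2):=\mathsf{Combine}(i,j,t,k_{qkd},k_{pqc})$; abort if $\tau_1\ne\tau_1'$ or $\tau_2\neq\tau_2'$; output $k_{sess}$. Two sessions match if they have opposite roles (one initiator, one responder), each one's owner is the other's peer, and they have the same transcript $(m_1,m_2)$. *)

(* Defs.v *)
From HB Require Import structures.
From mathcomp Require Import all_boot all_order all_algebra.
Set Implicit Arguments. Unset Strict Implicit. Unset Printing Implicit Defensive.
Import Order.TTheory GRing.Theory Num.Theory.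
Local Open Scope ring_scope.

Definition pr (R : numFieldType) (T : finType) (E : pred T) : R :=
  #|[pred x | E x]|%:R / #|T|%:R.

(* A KEM whose probabilistic algorithms take uniform coins from finite types. *)
Record KEM := Kem {
  kem_pk : Type;
  kem_sk : Type;
  kem_ct : Type;
  kem_key : eqType;
  kem_kgcoins : finType;
  kem_enccoins : finType;
  KeyGen : kem_kgcoins -> kem_pk * kem_sk;
  Encaps : kem_pk -> kem_enccoins -> kem_ct * kem_key;
  Decaps : kem_sk -> kem_ct -> kem_key
}.

Definition kem_correct (R : numFieldType) (K : KEM) (delta : R) : Prop :=
  pr R [pred r : kem_kgcoins K * kem_enccoins K |
          let: (pk, sk) := KeyGen r.1 in
          let: (c, k) := Encaps pk r.2 in
          Decaps sk c != k] <= delta.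

Definition bits := seq bool.
Definition xor_bits (a b : bits) : bits := [seq x.1 (+) x.2 | x <- zip a b].

Section Protocol.
Variables (Ks Ke : KEM) (I : Type) (Kid : Type) (Tag1 Tag2 : eqType).
(* lengths of the MAC keys of MAC^(qkd) and MAC^(pqc) *)
Variables (lq lp : nat).
Variable KDF : kem_key Ks -> kem_key Ks -> kem_key Ke -> bits.

Definition msg1 := (kem_ct Ks * kem_pk Ke)%type.
Definition transcript := (msg1 * (kem_ct Ks * kem_ct Ke * Kid))%type.
Definition msg2 := (kem_ct Ks * kem_ct Ke * Kid * Tag1 * Tag2)%type.
Definition init_state := (kem_key Ks * kem_sk Ke * msg1)%type.

Variable MACq : bits -> transcript * I * I -> Tag1.
Variable MACp : bits -> transcript * Tag1 * I * I -> Tag2.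

Definition Combine (iI iR : I) (t : transcript) (kqkd kpqc : bits)
  : option (bits * Tag1 * Tag2) :=
  if (lq <= size kqkd)%N && (lp <= size kpqc)%N then
    let kqm := take lq kqkd in let kqs := drop lq kqkd in
    let kpm := take lp kpqc in let kps := drop lp kpqc in
    let ksess := xor_bits kqs kps in
    let tau1 := MACq kqm (t, iI, iR) in
    let tau2 := MACp kpm (t, tau1, iI, iR) in
    Some (ksess, tau1, tau2)
  else None.

Definition Init (pkj : kem_pk Ks) (r : kem_enccoins Ks * kem_kgcoins Ke)
  : msg1 * init_state :=
  let: (cb, kb) := Encaps pkj r.1 in
  let: (pke, ske) := KeyGen r.2 in
  let m1 := (cb, pke) in
  (m1, (kb, ske, m1)).

(* SendM1 by responder i with peer j; (kid, kqkd) is the output of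
   QKD-GET-KEY(sid, l_qkd); coins for Encaps_stat and Encaps_eph. *)
Definition SendM1 (i : I) (ski : kem_sk Ks) (j : I) (pkj : kem_pk Ks)
  (m1 : msg1) (kid : Kid) (kqkd : bits)
  (r : kem_enccoins Ks * kem_enccoins Ke) : option (msg2 * bits) :=
  let: (cb, pke) := m1 in
  let kb' := Decaps ski cb in
  let: (ca, ka) := Encaps pkj r.1 in
  let: (ce, ke) := Encaps pke r.2 in
  let kpqc := KDF kb' ka ke in
  let t : transcript := (m1, (ca, ce, kid)) in
  match Combine j i t kqkd kpqc with
  | Some (ksess, tau1, tau2) => Some ((ca, ce, kid, tau1, tau2), ksess)
  | None => None
  end.

(* SendM2 by initiator i with peer j; qget models
   QKD-GET-KEY-WITH-ID(sid, .), None standing for bottom. *)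
Definition SendM2 (i : I) (ski : kem_sk Ks) (j : I) (s : init_state)
  (m2 : msg2) (qget : Kid -> option bits) : option bits :=
  let: (ca, ce, kid, tau1', tau2') := m2 in
  let: (kb, ske, m1) := s in
  let ka' := Decaps ski ca in
  let ke' := Decaps ske ce in
  let kpqc := KDF kb ka' ke' in
  match qget kid with
  | None => None
  | Some kqkd =>
    let t : transcript := (m1, (ca, ce, kid)) in
    match Combine i j t kqkd kpqc with
    | Some (ksess, tau1, tau2) =>
        if (tau1 == tau1') && (tau2 == tau2') then Some ksess else None
    | None => None
    end
  end.

End Protocol.

(* The random coins of one honest run: static key-generation coins for every
   party, Init coins of the initiator, SendM1 coins of the responder. *)
Definition run_coins (Ks Ke : KEM) (I : finType) :=
  ({ffun I -> kem_kgcoins Ks} * (kem_enccoins Ks * kem_kgcoins Ke)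
    * (kem_enccoins Ks * kem_enccoins Ke))%type.

(* Bad event for a pair of matching sessions (initiator i with peer j,
   responder j with peer i, same transcript (m1, m2)): both sessions complete
   and their session keys differ. *)
Definition keys_differ (Ks Ke : KEM) (I : finType) (Kid : Type)
  (Tag1 Tag2 : eqType) (lq lp : nat)
  (KDF : kem_key Ks -> kem_key Ks -> kem_key Ke -> bits)
  (MACq : bits -> transcript Ks Ke Kid * I * I -> Tag1)
  (MACp : bits -> transcript Ks Ke Kid * Tag1 * I * I -> Tag2)
  (kid : Kid) (kqkd : bits) (qget : Kid -> option bits)
  (i j : I) : pred (run_coins Ks Ke I) :=
  fun rc =>
    let: (rs, rI, rR) := rc in
    let pk p := (KeyGen (rs p)).1 in
    let sk p := (KeyGen (rs p)).2 in
    let: (m1, s) := Init (Ke:=Ke) (pk j) rI in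
    match SendM1 lq lp KDF MACq MACp j (sk j) i (pk i) m1 kid kqkd rR with
    | None => false
    | Some (m2, kR) =>
      match SendM2 lq lp KDF MACq MACp i (sk i) j s m2 qget with
      | None => false
      | Some kI => kI != kR
      end
    end.

(* Main.v *)
Require Import Defs.
From HB Require Import structures.
From mathcomp Require Import all_boot all_order all_algebra.
Import Order.TTheory GRing.Theory Num.Theory.
From mathcomp Require Import ring lra.

Definition bad (K : KEM) (r : kem_kgcoins K * kem_enccoins K) : bool :=
  let: (pk, sk) := KeyGen r.1 in
  let: (c, k) := Encaps pk r.2 in
  Decaps sk c != k.

Lemma pointwise (Ks Ke : KEM) (I : finType) (Kid : Type) (Tag1 Tag2 : eqType) (lq lp : nat)
  (KDF : kem_key Ks -> kem_key Ks -> kem_key Ke -> bits)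
  (MACq : bits -> transcript Ks Ke Kid * I * I -> Tag1)
  (MACp : bits -> transcript Ks Ke Kid * Tag1 * I * I -> Tag2)
  (kid : Kid) (kqkd : bits) (qget : Kid -> option bits)
  (Hk : qget kid = Some kqkd) (i j : I) (rc : run_coins Ks Ke I) :
  keys_differ lq lp KDF MACq MACp kid kqkd qget i j rc ->
  [|| bad Ks (rc.1.1 j, rc.1.2.1), bad Ks (rc.1.1 i, rc.2.1) | bad Ke (rc.1.2.2, rc.2.2)].
Proof.
case: rc => [[rs [a b]] [c d]] /=.
rewrite /keys_differ /bad /Init /SendM1 /SendM2 /=.
case: (KeyGen (rs j)) => pkj skj /=.
case: (KeyGen (rs i)) => pki ski /=.
case: (Encaps pkj a) => cb kb /=.
case: (KeyGen b) => pke ske /=.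
case: (Encaps pki c) => ca ka /=.
case: (Encaps pke d) => ce ke /=.
apply: contraLR => /norP [/negbNE/eqP E1 /norP [/negbNE/eqP E2 /negbNE/eqP E3]].
rewrite E1 /=.
case E: Combine => [[[ks t1] t2]|] //=.
by rewrite E2 E3 Hk E !eqxx /= eqxx.
Qed.

Lemma sum_pair (X Y : finType) (G : X * Y -> nat) :
  \sum_(p : X * Y) G p = \sum_x \sum_y G (x, y).
Proof. by rewrite pair_bigA; apply: eq_bigr => -[x y]. Qed.

Lemma sumc (Y : finType) (n : nat) : \sum_(y : Y) n = (#|Y| * n)%N.
Proof. by rewrite sum_nat_const. Qed.

Lemma sum_ffun_at (I K : finType) (j : I) (g : K -> nat) :
  \sum_(f : {ffun I -> K}) g (f j) = (#|K| ^ #|I|.-1 * \sum_k g k)%N.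
Proof.
have E := @bigA_distr_bigA nat 0%N 1%N muln addn I K (fun x (k : K) => if x == j then g k else 1%N).
rewrite (bigD1 j) //= eqxx in E.
transitivity ((\sum_(k : K) g k) * \prod_(i | i != j) \sum_(j0 : K) (if i == j then g j0 else 1%N))%N; last first.
have -> : \prod_(i | i != j) \sum_(j0 : K) (if i == j then g j0 else 1%N)
   = \prod_(i | i != j) #|K|.
  apply: eq_bigr => x /negbTE ->; by rewrite sumc muln1.
  by rewrite (prod_nat_const (predC1 j)) cardC1 mulnC.
rewrite E; apply: eq_bigr => f _.
rewrite (bigD1 j) //= eqxx big1 ?muln1 // => x /negbTE -> //.
Qed.

Lemma frac_le (R : realFieldType) (c x y : nat) :
  (((c * x)%:R / (c * y)%:R : R) <= x%:R / y%:R)%R.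
Proof.
have [->|c0] := eqVneq c 0%N; first by rewrite !mul0n mul0r divr_ge0.
rewrite !natrM invfM mulrACA divff ?mul1r // pnatr_eq0 //.
Qed.

Lemma card_sum (T : finType) (E : pred T) : #|[pred x | E x]| = \sum_x (E x : nat).
Proof. rewrite -sum1_card big_mkcond; apply: eq_bigr => x _; rewrite inE; by case: (E x). Qed.

Lemma cnt1 (I K A B C D : finType) (j : I) (h : K * A -> bool) :
 \sum_(rc : {ffun I -> K} * (A * B) * (C * D)) (h (rc.1.1 j, rc.1.2.1) : nat)
   = (#|K|^#|I|.-1 * #|B| * #|C| * #|D| * \sum_r h r)%N.
Proof.
rewrite sum_pair /=.
under eq_bigr => x _ do rewrite sumc.
rewrite -big_distrr /= sum_pair /=.
under eq_bigr => f _ do rewrite sum_pair /=.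
under eq_bigr => f _ do under eq_bigr => a _ do rewrite sumc.
under eq_bigr => f _ do rewrite -big_distrr /=.
rewrite -big_distrr /= exchange_big /=.
under eq_bigr => a _ do rewrite (@sum_ffun_at I K j (fun k => (h (k, a) : nat))).
rewrite -big_distrr /= exchange_big /= -(@sum_pair _ _ (fun r => (h r : nat))) card_prod.
rewrite ?card_prod; ring.
Qed.

Lemma cnt2 (I K A B C D : finType) (i : I) (h : K * C -> bool) :
 \sum_(rc : {ffun I -> K} * (A * B) * (C * D)) (h (rc.1.1 i, rc.2.1) : nat)
   = (#|K|^#|I|.-1 * #|A| * #|B| * #|D| * \sum_r h r)%N.
Proof.
rewrite sum_pair /=.
under eq_bigr => x _ do rewrite sum_pair /=.
under eq_bigr => x _ do under eq_bigr => c _ do rewrite sumc.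
under eq_bigr => x _ do rewrite -big_distrr /=.
rewrite -big_distrr /= sum_pair /=.
under eq_bigr => f _ do rewrite sumc.
rewrite -big_distrr /= exchange_big /=.
under eq_bigr => c _ do rewrite (@sum_ffun_at I K i (fun k => (h (k, c) : nat))).
rewrite -big_distrr /= exchange_big /= -(@sum_pair _ _ (fun r => (h r : nat))) card_prod.
rewrite ?card_prod; ring.
Qed.

Lemma cnt3 (I K A B C D : finType) (h : B * D -> bool) :
 \sum_(rc : {ffun I -> K} * (A * B) * (C * D)) (h (rc.1.2.2, rc.2.2) : nat)
   = (#|{ffun I -> K}| * #|A| * #|C| * \sum_r h r)%N.
Proof.
rewrite sum_pair exchange_big /= sum_pair /= sumc.
under eq_bigr => d _ do rewrite sum_pair /= sumc sum_pair /= sumc.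
rewrite -big_distrr /= -big_distrr /= exchange_big /= -(@sum_pair _ _ (fun r => (h r : nat))).
ring.
Qed.

Local Open Scope ring_scope.

Theorem mainTheorem1 (R : realFieldType) (Ks Ke : KEM) (d_stat d_eph : R)
  (Hstat : kem_correct Ks d_stat) (Heph : kem_correct Ke d_eph)
  (I : finType) (Kid : Type) (Tag1 Tag2 : eqType) (lq lp : nat)
  (KDF : kem_key Ks -> kem_key Ks -> kem_key Ke -> bits)
  (MACq : bits -> transcript Ks Ke Kid * I * I -> Tag1)
  (MACp : bits -> transcript Ks Ke Kid * Tag1 * I * I -> Tag2)
  (kid : Kid) (kqkd : bits) (qget : Kid -> option bits)
  (Hkid_uncorrupted : qget kid = Some kqkd)
  (i j : I) :
  @pr R _ (keys_differ lq lp KDF MACq MACp kid kqkd qget i j)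
    <= d_eph + 2 * d_stat.
Proof.
have Hp := @pointwise Ks Ke I Kid Tag1 Tag2 lq lp KDF MACq MACp kid kqkd qget Hkid_uncorrupted i j.
rewrite /pr card_sum.
set E := keys_differ _ _ _ _ _ _ _ _ _ _.
set S1 := (\sum_(rc : run_coins Ks Ke I) (bad Ks (rc.1.1 j, rc.1.2.1) : nat))%N.
set S2 := (\sum_(rc : run_coins Ks Ke I) (bad Ks (rc.1.1 i, rc.2.1) : nat))%N.
set S3 := (\sum_(rc : run_coins Ks Ke I) (bad Ke (rc.1.2.2, rc.2.2) : nat))%N.
have HS : (\sum_rc (E rc : nat) <= S1 + S2 + S3)%N.
  rewrite /S1 /S2 /S3 -!big_split /=; apply: leq_sum => rc _.
  have := Hp rc; rewrite -/E; case: (E rc) => //= /(_ isT).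
  by case: bad; case: bad; case: bad.
set NT := #|_|.
apply: (@le_trans _ _ ((S1 + S2 + S3)%:R / NT%:R)).
  by rewrite ler_wpM2r ?invr_ge0 // ler_nat.
have Ipos : (0 < #|I|)%N by apply/card_gt0P; exists j.
have I0 : #|I| = (#|I|.-1).+1 by rewrite prednK.
set N := (#|kem_kgcoins Ks| ^ #|I|.-1)%N.
have eT : NT = (#|kem_kgcoins Ks| * N * (#|kem_enccoins Ks| * #|kem_kgcoins Ke|) * (#|kem_enccoins Ks| * #|kem_enccoins Ke|))%N.
  by rewrite /NT /run_coins !card_prod card_ffun I0 expnS.
set k := #|kem_kgcoins Ks|.
have h1 : S1%:R / NT%:R <= d_stat.
  rewrite /S1 cnt1 eT -/N -/k.
  rewrite (_ : (k * N * (#|kem_enccoins Ks| * #|kem_kgcoins Ke|) * (#|kem_enccoins Ks| * #|kem_enccoins Ke|))%N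
     = (N * #|kem_kgcoins Ke| * #|kem_enccoins Ks| * #|kem_enccoins Ke| * (k * #|kem_enccoins Ks|))%N); last by ring.
  apply: le_trans (frac_le _ _ _ _) _.
  move: Hstat; rewrite /kem_correct /pr card_sum card_prod; exact.
have h2 : S2%:R / NT%:R <= d_stat.
  rewrite /S2 cnt2 eT -/N -/k.
  rewrite (_ : (k * N * (#|kem_enccoins Ks| * #|kem_kgcoins Ke|) * (#|kem_enccoins Ks| * #|kem_enccoins Ke|))%N
     = (N * #|kem_enccoins Ks| * #|kem_kgcoins Ke| * #|kem_enccoins Ke| * (k * #|kem_enccoins Ks|))%N); last by ring.
  apply: le_trans (frac_le _ _ _ _) _.
  move: Hstat; rewrite /kem_correct /pr card_sum card_prod; exact.
have h3 : S3%:R / NT%:R <= d_eph.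
  rewrite /S3 cnt3 eT -/N -/k card_ffun I0 expnS -/N -/k.
  rewrite (_ : (k * N * (#|kem_enccoins Ks| * #|kem_kgcoins Ke|) * (#|kem_enccoins Ks| * #|kem_enccoins Ke|))%N
     = (k * N * #|kem_enccoins Ks| * #|kem_enccoins Ks| * (#|kem_kgcoins Ke| * #|kem_enccoins Ke|))%N); last by ring.
  apply: le_trans (frac_le _ _ _ _) _.
  move: Heph; rewrite /kem_correct /pr card_sum card_prod; exact.
rewrite !natrD !mulrDl.
lra.
Qed.
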